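(* Modularity is rich: for every finite set $V$ with $|V|\ge 2$ and every partition $C^*$ of $V$, there exist edge weights $E$ such that, for the graph $G=(V,E)$, the modularity $Q_{\mathrm{mod}}(G,C)$ is defined for every clustering $C$ of $G$ and $C^*$ is the unique clustering of $G$ maximizing $Q_{\mathrm{mod}}(G,\cdot)$.
   Context: A (symmetric weighted) graph is a pair $G=(V,E)$ of a finite set $V$ of nodes and a function $E:V\times V\to\mathbb{R}_{\ge 0}$ with $E(i,j)=E(j,i)$; self loops ($E(i,i)>0$) are allowed. A clustering of $G$ is a partition of $V$ into nonempty, pairwise disjoint sets (clusters). For $c\subseteq V$ define the volume $v_c=\sum_{i\in c}\sum_{j\in V}E(i,j)$ and the within-cluster weight $w_c=\sum_{i\in c}\sum_{j\in c}E(i,j)$; $v_V$ is the volume of the whole graph. Modularity is $Q_{\mathrm{mod}}(G,C)=\sum_{c\in C}\left(\frac{w_c}{v_V}-\left(\frac{v_c}{v_V}\right)^2\right)$, defined when $v_V>0$. *)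

(* Defs.v *)
From HB Require Import structures.
From mathcomp Require Import all_boot all_order all_algebra.
From mathcomp Require Import reals.
Set Implicit Arguments. Unset Strict Implicit. Unset Printing Implicit Defensive.
Import Order.TTheory GRing.Theory Num.Theory.
Local Open Scope ring_scope.

Definition is_weighted_graph (R : realType) (V : finType) (E : V -> V -> R) : Prop :=
  (forall i j, 0 <= E i j) /\ (forall i j, E i j = E j i).

(* A clustering is a partition of V into nonempty pairwise disjoint sets
   (mathcomp's [partition P [set: V]] includes set0 \notin P). *)
Definition clustering (V : finType) (C : {set {set V}}) : bool :=
  partition C [set: V].

Definition volume (R : realType) (V : finType) (E : V -> V -> R) (c : {set V}) : R :=
  \sum_(i in c) \sum_(j : V) E i j.

Definition within (R : realType) (V : finType) (E : V -> V -> R) (c : {set V}) : R :=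
  \sum_(i in c) \sum_(j in c) E i j.

Definition modularity (R : realType) (V : finType) (E : V -> V -> R)
    (C : {set {set V}}) : R :=
  \sum_(c in C) (within E c / volume E [set: V]
                 - (volume E c / volume E [set: V]) ^+ 2).

Definition modularity_defined (R : realType) (V : finType) (E : V -> V -> R) : Prop :=
  volume E [set: V] > 0.

(* Main.v *)
Require Import Defs.
From HB Require Import structures.
From mathcomp Require Import all_boot all_order all_algebra.
From mathcomp Require Import reals.
From mathcomp Require Import lra.
Import Order.TTheory GRing.Theory Num.Theory.
Local Open Scope ring_scope.

Set Implicit Arguments. Unset Strict Implicit.
Section S.
Variables (R : realType) (V : finType).

Definition deg (E : V -> V -> R) i := \sum_j E i j.
Definition Fm (E : V -> V -> R) i j :=
  (E i j - deg E i * deg E j / volume E [set: V]) / volume E [set: V].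

Lemma part_facts (C : {set {set V}}) : clustering C ->
  cover C = [set: V] /\ trivIset C /\ set0 \notin C.
Proof. by case/and3P => /eqP -> -> ->. Qed.

Lemma in_own (C : {set {set V}}) i : clustering C -> i \in pblock C i.
Proof. by move=> /part_facts [hc _]; rewrite mem_pblock hc inE. Qed.

Lemma pb_sym (C : {set {set V}}) i j : clustering C ->
  (j \in pblock C i) = (i \in pblock C j).
Proof.
move=> hC; have [hc [ht _]] := part_facts hC.
apply/idP/idP => h.
  by rewrite (same_pblock ht h) (in_own _ hC).
by rewrite (same_pblock ht h) (in_own _ hC).
Qed.

Lemma mod_expand (E : V -> V -> R) (C : {set {set V}}) : clustering C ->
  modularity E C = \sum_i \sum_j (j \in pblock C i)%:R * Fm E i j.
Proof.
move=> hC; have [hc [ht _]] := part_facts hC.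
set m := volume E [set: V].
have -> : \sum_i \sum_j (j \in pblock C i)%:R * Fm E i j =
          \sum_(i in cover C) \sum_(j in pblock C i) Fm E i j.
  rewrite hc; apply: eq_big => [i|i _]; first by rewrite inE.
  rewrite [RHS]big_mkcond; apply: eq_bigr => j _.
  by case: (j \in _); rewrite ?mul1r ?mul0r.
rewrite big_trivIset //; apply: eq_bigr => c cC.
have -> : \sum_(i in c) \sum_(j in pblock C i) Fm E i j =
          \sum_(i in c) \sum_(j in c) Fm E i j.
  by apply: eq_bigr => i ic; rewrite (def_pblock ht cC ic).
have -> : volume E c = \sum_(i in c) deg E i by [].
rewrite /within /Fm -/m.
transitivity (\sum_(i in c) \sum_(j in c) E i j / m -
   \sum_(i in c) \sum_(j in c) (deg E i * deg E j) / (m * m)).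
  rewrite expr2 mulf_div; congr (_ - _).
    by rewrite mulr_suml; apply: eq_bigr => i _; rewrite mulr_suml.
  rewrite mulr_suml mulr_suml; apply: eq_bigr => i _.
  by rewrite mulr_sumr mulr_suml.
rewrite -sumrB; apply: eq_bigr => i _; rewrite -sumrB; apply: eq_bigr => j _.
by rewrite mulrBl invfM mulrA.
Qed.

Lemma sum_pos (I : finType) (f : I -> R) i0 :
  (forall i, 0 <= f i) -> 0 < f i0 -> 0 < \sum_i f i.
Proof.
move=> h0 h; rewrite (bigD1 i0) //=; apply: (lt_le_trans h).
by rewrite lerDl sumr_ge0.
Qed.

Lemma sub_part (C D : {set {set V}}) : clustering C -> clustering D ->
  (forall x, pblock C x = pblock D x) -> C \subset D.
Proof.
move=> hC hD h; have [hc [ht h0]] := part_facts hC.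
have [hd _] := part_facts hD.
apply/subsetP => c cC.
have : c != set0 by apply: contraNneq h0 => <-.
case/set0Pn => x xc.
by rewrite -(def_pblock ht cC xc) h pblock_mem // hd inE.
Qed.

Lemma main_cmp (E : V -> V -> R) (Cs C : {set {set V}}) :
  clustering Cs -> clustering C -> C != Cs ->
  (forall i j, i != j -> j \in pblock Cs i -> 0 < Fm E i j) ->
  (forall i j, j \notin pblock Cs i -> Fm E i j < 0) ->
  modularity E C < modularity E Cs.
Proof.
move=> hCs hC ne hpos hneg.
rewrite (mod_expand E hC) (mod_expand E hCs) -subr_gt0 -sumrB.
under eq_bigr => i _ do rewrite -sumrB.
under eq_bigr => i _ do under eq_bigr => j _ do rewrite -mulrBl.
have Gge : forall i j, 0 <= ((j \in pblock Cs i)%:R - (j \in pblock C i)%:R) * Fm E i j.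
  move=> i j; have [->|nij] := eqVneq i j.
    by rewrite !in_own // subrr mul0r.
  case: (boolP (j \in pblock Cs i)) => hj.
    apply: mulr_ge0; last exact: ltW (hpos _ _ nij hj).
    by case: (j \in pblock C i); rewrite ?subrr ?subr0.
  apply: mulr_le0; last exact: ltW (hneg _ _ hj).
  by case: (j \in pblock C i); rewrite ?subrr ?sub0r ?oppr_le0.
have : ~~ [forall i, forall j, (j \in pblock Cs i) == (j \in pblock C i)].
  apply: contra ne => /forallP hall.
  have hp : forall x, pblock C x = pblock Cs x.
    move=> x; apply/setP => y; move/forallP: (hall x) => /(_ y) /eqP.
    by move=> ->.
  by rewrite eqEsubset !sub_part // => x; rewrite hp.
case/forallPn => i /forallPn [j hij].
apply: (sum_pos (i0 := i)) => [k|]; first exact: sumr_ge0.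
apply: (sum_pos (i0 := j)) => [k|]; first exact: Gge.
have nij : i != j by apply: contraNneq hij => ->; rewrite !in_own.
move: hij; case: (boolP (j \in pblock Cs i)) => hj; case: (j \in pblock C i) => // _.
  by rewrite subr0 mul1r hpos.
by rewrite sub0r mulN1r oppr_gt0 hneg.
Qed.

Definition Ebuild (Cs : {set {set V}}) (i j : V) : R :=
  (j \in pblock Cs i)%:R - (i == j)%:R / 2.

Lemma deg_build Cs i : deg (Ebuild Cs) i = #|pblock Cs i|%:R - 1 / 2.
Proof.
rewrite /deg /Ebuild sumrB; congr (_ - _).
  rewrite -sum1_card natr_sum [RHS]big_mkcond /=.
  by apply: eq_bigr => j _; case: (j \in _).
rewrite (bigD1 i) //= eqxx big1 ?addr0 // => j /negPf.
by rewrite eq_sym => ->; rewrite mul0r.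
Qed.

Lemma build_ok Cs : clustering Cs -> (0 < #|V|)%N ->
  [/\ is_weighted_graph (Ebuild Cs), modularity_defined (Ebuild Cs),
    (forall i j, i != j -> j \in pblock Cs i -> 0 < Fm (Ebuild Cs) i j) &
    (forall i j, j \notin pblock Cs i -> Fm (Ebuild Cs) i j < 0)].
Proof.
move=> hCs /card_gt0P [x0 _].
have [hc [ht _]] := part_facts hCs.
set E := Ebuild Cs.
have s1 : forall i, 1 <= #|pblock Cs i|%:R :> R.
  move=> i; rewrite ler1n; apply/card_gt0P; exists i; exact: in_own.
have dpos : forall i, 0 < deg E i.
  move=> i; rewrite deg_build; have := s1 i; lra.
have samed : forall i l, l \in pblock Cs i -> deg E l = deg E i.
  by move=> i l hl; rewrite !deg_build (same_pblock ht hl).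
have mge : forall i, #|pblock Cs i|%:R * deg E i <= volume E [set: V].
  move=> i; rewrite /volume.
  rewrite [X in _ <= X](bigID (fun l => l \in pblock Cs i)) /=.
  apply: ler_wpDr; first by apply: sumr_ge0 => l _; exact: ltW (dpos l).
  rewrite (eq_bigl (fun l => l \in pblock Cs i)); last by move=> l; rewrite inE.
  rewrite (eq_bigr (fun _ => deg E i)); last by move=> l hl; exact: samed.
  by rewrite sumr_const mulr_natl.
have mpos : 0 < volume E [set: V].
  apply: (lt_le_trans _ (mge x0)); apply: mulr_gt0 => //.
  exact: (lt_le_trans ltr01 (s1 x0)).
split.
- split.
    move=> i j; rewrite /E /Ebuild; have [->|nij] := eqVneq i j.
      rewrite in_own // ?eqxx /=; lra.
    by rewrite ?(negPf nij) mul0r subr0 ler0n.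
  by move=> i j; rewrite /E /Ebuild (pb_sym _ _ hCs) eq_sym.
- exact: mpos.
- move=> i j nij hj; rewrite /Fm.
  have -> : E i j = 1 by rewrite /E /Ebuild hj (negPf nij) mul0r subr0.
  rewrite (samed _ _ hj); apply: divr_gt0 => //; rewrite subr_gt0.
  rewrite ltr_pdivrMr // mul1r; apply: (lt_le_trans _ (mge i)).
  rewrite ltr_pM2r //; rewrite deg_build; lra.
- move=> i j hj; rewrite /Fm.
  have nij : i != j by apply: contraNneq hj => <-; rewrite in_own.
  have -> : E i j = 0 by rewrite /E /Ebuild (negPf hj) (negPf nij) mul0r subr0.
  rewrite sub0r mulNr oppr_lt0; apply: divr_gt0 => //; apply: divr_gt0 => //.
  exact: mulr_gt0.
Qed.
End S.

Unset Implicit Arguments.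
Theorem theorem1 (R : realType) (V : finType) (Cstar : {set {set V}}) :
  (2 <= #|V|)%N -> clustering Cstar ->
  exists E : V -> V -> R,
    is_weighted_graph E /\
    modularity_defined E /\
    (forall C, clustering C -> C != Cstar ->
       modularity E C < modularity E Cstar).
Proof.
move=> h2 hCs.
have [hw hd hp hn] := @build_ok R V Cstar hCs (ltnW h2).
exists (Ebuild R Cstar); split => //; split => // C hC ne.
exact: main_cmp.
Qed.
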